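(* Let $\Gamma$ be a finite cyclic group of order $f$ with generator $\sigma$. The $\mathbb Z[\Gamma]$-submodules $M$ of $\mathbb Z[\Gamma]$ such that $\mathbb Z[\Gamma]/M$ is torsion-free over $\mathbb Z$ are exactly the modules $\overline M_{\underline d}$, for $\underline d$ ranging over the sets of positive divisors of $f$.
   Context: For $d\mid f$, $M_d=\bigoplus_{0\le l\le\varphi(d)-1}\mathbb Z\,P_{f,d}(\sigma)\sigma^l\subset\mathbb Z[\Gamma]$, where $P_{f,d}(X)=(X^f-1)/\Phi_d(X)$, $\Phi_d$ is the $d$-th cyclotomic polynomial and $\varphi$ Euler's totient function. For a set $\underline d$ of divisors of $f$, $M_{\underline d}=\bigoplus_{d\in\underline d}M_d$ and $\overline M_{\underline d}=\{\chi\in\mathbb Z[\Gamma]:a\chi\in M_{\underline d}\text{ for some }a\in\mathbb Z\smallsetminus\{0\}\}$. *)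

(* Defs.v *)
From mathcomp Require Import all_boot all_order all_algebra all_fingroup all_solvable all_field.
Set Implicit Arguments. Unset Strict Implicit. Unset Printing Implicit Defensive.
Import GRing.Theory.
Local Open Scope ring_scope.

(* Elements are integer-valued functions on gT supported
   on <[sigma]> (i.e. formal Z-combinations of elements of Gamma). *)
Section GroupRing.
Variables (gT : finGroupType) (sigma : gT).

Definition ZG : pred {ffun gT -> int} :=
  [pred x : {ffun gT -> int} | [forall g : gT, (g \notin <[sigma]>%g) ==> (x g == 0 :> int)]].

Definition gmul (x y : {ffun gT -> int}) : {ffun gT -> int} :=
  [ffun g => \sum_(h in <[sigma]>%g) x h * y (h^-1 * g)%g].

Definition peval (p : {poly int}) : {ffun gT -> int} :=
  [ffun g => \sum_(i < size p) p`_i * ((sigma ^+ i)%g == g)%:Z].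

Definition f := #[sigma]%g.

Definition Pfd (d : nat) : {poly int} := ('X^f - 1) %/ 'Phi_d.

Definition Md (d : nat) (x : {ffun gT -> int}) : Prop :=
  exists c : 'I_(totient d) -> int,
    x = \sum_(l < totient d) peval (Pfd d * 'X^l) *~ c l.

(* M_D = (+)_{d in D} M_d, for a set D of divisors (given as a duplicate-free list) *)
Definition MD (D : seq nat) (x : {ffun gT -> int}) : Prop :=
  exists c : nat -> nat -> int,
    x = \sum_(d <- D) \sum_(l < totient d) peval (Pfd d * 'X^l) *~ c d l.

Definition MbarD (D : seq nat) (x : {ffun gT -> int}) : Prop :=
  x \in ZG /\ exists a : int, a != 0 /\ MD D (x *~ a).

Definition is_submodule (M : {ffun gT -> int} -> Prop) : Prop :=
  [/\ forall x, M x -> x \in ZG,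
      M 0,
      forall x y, M x -> M y -> M (x + y),
      forall x, M x -> M (- x) &
      forall r x, r \in ZG -> M x -> M (gmul r x)].

Definition torsion_free_quot (M : {ffun gT -> int} -> Prop) : Prop :=
  forall (a : int) x, a != 0 -> x \in ZG -> M (x *~ a) -> M x.

End GroupRing.

(* Main.v *)
Require Import Defs.
From mathcomp Require Import all_boot all_order all_algebra all_fingroup all_solvable all_field.
From mathcomp Require Import ring.
From Stdlib Require Import ClassicalEpsilon.
Set Implicit Arguments. Unset Strict Implicit. Unset Printing Implicit Defensive.
Import GRing.Theory Num.Theory.
Local Open Scope ring_scope.

Section GR.
Variables (gT : finGroupType) (s : gT).
Local Notation n := (#[s]%g).
Local Notation ZG := (ZG s).
Local Notation peval := (peval s).
Local Notation gmul := (gmul s).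

Lemma peval_gen (p : {poly int}) m : (size p <= m)%N -> forall g,
  peval p g = \sum_(i < m) p`_i * ((s ^+ i)%g == g)%:Z.
Proof.
move=> hm g; rewrite ffunE (big_ord_widen m (fun i => p`_i * ((s ^+ i)%g == g)%:Z) hm).
rewrite big_mkcond /=; apply: eq_bigr => i _; case: ifP => // /negbT.
by rewrite -leqNgt => h; rewrite nth_default // mul0r.
Qed.

Lemma peval_add p q : peval (p + q) = peval p + peval q.
Proof.
apply/ffunP => g; rewrite [in RHS]ffunE.
have h1 : (size p <= size p + size q)%N by rewrite leq_addr.
have h2 : (size q <= size p + size q)%N by rewrite leq_addl.
have h3 : (size (p + q)%R <= size p + size q)%N.
  by apply: leq_trans (size_polyD _ _) _; rewrite geq_max h1 h2.
rewrite (peval_gen h1) (peval_gen h2) (peval_gen h3) -big_split /=.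
by apply: eq_bigr => i _; rewrite coefD mulrDl.
Qed.

Lemma peval0 : peval 0 = 0.
Proof. by apply/ffunP => g; rewrite !ffunE size_poly0 big_ord0. Qed.

Lemma peval_opp p : peval (- p) = - peval p.
Proof. by apply/eqP; rewrite -addr_eq0 -peval_add addNr peval0. Qed.

Lemma peval_sub p q : peval (p - q) = peval p - peval q.
Proof. by rewrite peval_add peval_opp. Qed.

Lemma peval_scale c p : peval (c *: p) = peval p *~ c.
Proof.
apply/ffunP => g; rewrite ffunMzE.
have h1 : (size (c *: p) <= size p)%N by apply: size_scale_leq.
rewrite (peval_gen h1) (peval_gen (leqnn _)).
rewrite mulrzz mulr_suml; apply: eq_bigr => i _; rewrite coefZ; ring.
Qed.

Lemma peval_sum (I : Type) (r : seq I) (P : pred I) (F : I -> {poly int}) :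
  peval (\sum_(i <- r | P i) F i) = \sum_(i <- r | P i) peval (F i).
Proof. exact: (big_morph peval peval_add peval0). Qed.

Lemma peval_ZG p : peval p \in ZG.
Proof.
apply/forallP => g; apply/implyP => hg; rewrite ffunE big1 // => i _.
case: eqP => [E|]; last by rewrite mulr0.
by rewrite -E mem_cycle in hg.
Qed.

Lemma ZG0 x g : x \in ZG -> g \notin <[s]>%g -> x g = 0.
Proof. by move=> /forallP /(_ g) /implyP H /H /eqP. Qed.

Lemma pevalXn j g : peval 'X^j g = ((s ^+ j)%g == g)%:Z.
Proof.
rewrite (peval_gen (leqnn _)) size_polyXn big_ord_recr /= big1 ?add0r.
  by rewrite coefXn eqxx mul1r.
by move=> i _; rewrite coefXn eqn_leq [(j <= i)%N]leqNgt ltn_ord andbF mul0r.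
Qed.

Definition lift (x : {ffun gT -> int}) : {poly int} := \poly_(i < n) x (s ^+ i)%g.

Lemma peval_small (p : {poly int}) k : (size p <= n)%N -> (k < n)%N -> peval p (s ^+ k)%g = p`_k.
Proof.
move=> hp hk; rewrite (peval_gen hp) (bigD1 (Ordinal hk)) //= eqxx mulr1 big1 ?addr0 //.
move=> i /eqP hi; rewrite eq_expg_mod_order !modn_small //.
by case: eqP => [E|]; [case: hi; apply: val_inj | rewrite mulr0].
Qed.

Lemma peval_lift x : x \in ZG -> peval (lift x) = x.
Proof.
move=> hx; apply/ffunP => g; case: (boolP (g \in <[s]>%g)) => hg.
  have [k hk ->] := cyclePmin hg.
  by rewrite peval_small ?size_poly // coef_poly hk.
rewrite ZG0 ?peval_ZG // ZG0 //.
Qed.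


Lemma peval_mulX q : peval (q * 'X) = [ffun g => peval q (s^-1 * g)%g].
Proof.
apply/ffunP => g; rewrite [RHS]ffunE.
have h : (size (q * 'X)%R <= (size q).+1)%N.
  by apply: leq_trans (size_polyMleq _ _) _; rewrite size_polyX addn2.
rewrite (peval_gen h) (peval_gen (leqnn _)) big_ord_recl /= coefMX eqxx mul0r add0r.
apply: eq_bigr => i _; rewrite coefMX /= /bump /= add1n expgS.
rewrite add0n; have -> : ((s * s ^+ i)%g == g) = ((s ^+ i)%g == (s^-1 * g)%g) => //.
by apply/eqP/eqP => [<-|->]; [rewrite mulKg | rewrite mulKVg].
Qed.

Lemma peval_mulXn p j : peval (p * 'X^j) = [ffun g => peval p ((s ^+ j)^-1 * g)%g].
Proof.
elim: j => [|j IH].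
  by apply/ffunP => g; rewrite expr0 mulr1 [RHS]ffunE expg0 invg1 mul1g.
apply/ffunP => g; rewrite exprSr mulrA peval_mulX IH !ffunE.
by rewrite mulgA -invMg -expgS.
Qed.

Lemma gmulDr x y z : gmul x (y + z) = gmul x y + gmul x z.
Proof.
apply/ffunP => g; rewrite !ffunE -big_split /=.
by apply: eq_bigr => h _; rewrite !ffunE mulrDr.
Qed.

Lemma gmul0r x : gmul x 0 = 0.
Proof. by apply/ffunP => g; rewrite !ffunE big1 // => h _; rewrite ffunE mulr0. Qed.

Lemma gmulzr x y c : gmul x (y *~ c) = gmul x y *~ c.
Proof.
apply/ffunP => g; rewrite !ffunE ffunMzE !ffunE mulrzz mulr_suml.
by apply: eq_bigr => h _; rewrite ffunMzE mulrzz mulrA.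
Qed.

Lemma gmul_sumr x (I : Type) (r : seq I) (P : pred I) (F : I -> {ffun gT -> int}) :
  gmul x (\sum_(i <- r | P i) F i) = \sum_(i <- r | P i) gmul x (F i).
Proof. exact: (big_morph (gmul x) (gmulDr x) (gmul0r x)). Qed.

Lemma gmul_pevalXn x j : x \in ZG ->
  gmul x (peval 'X^j) = [ffun g => x ((s ^+ j)^-1 * g)%g].
Proof.
move=> hx; apply/ffunP => g; rewrite !ffunE.
case: (boolP (g \in <[s]>%g)) => hg.
  have [k _ Eg] := cyclePmin hg.
  have hc : ((s ^+ j)^-1 * g = g * (s ^+ j)^-1)%g.
    by rewrite Eg; symmetry; apply: commuteV; apply: commuteX2; apply: commute_refl.
  have hs : (g * (s ^+ j)^-1)%g \in <[s]>%g by rewrite groupM ?groupV ?mem_cycle.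
  rewrite hc (bigD1 _ hs) /= big1 ?addr0.
    by rewrite pevalXn invMg invgK -mulgA mulVg mulg1 eqxx mulr1.
  move=> h /andP [hh hne]; rewrite pevalXn.
  case: eqP => [E|]; last by rewrite mulr0.
  by case/negP: hne; rewrite E invMg invgK mulKVg eqxx.
rewrite ZG0 // ?big1 // => [h hh|]; last first.
  by apply/negP => H; case/negP: hg; rewrite -(mulKVg (s ^+ j)%g g) groupM ?mem_cycle.
rewrite pevalXn; case: eqP => [E|]; last by rewrite mulr0.
by case/negP: hg; rewrite -(mulKVg h g) -E groupM ?mem_cycle.
Qed.

Lemma peval_mulXn' p j : peval (p * 'X^j) = gmul (peval p) (peval 'X^j).
Proof. by rewrite gmul_pevalXn ?peval_ZG // peval_mulXn. Qed.

Lemma peval_mul p q : peval (p * q) = gmul (peval p) (peval q).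
Proof.
rewrite -[q]coefK poly_def mulr_sumr !peval_sum gmul_sumr.
apply: eq_bigr => j _; rewrite -scalerAr !peval_scale gmulzr peval_mulXn' //.
Qed.

End GR.

Local Notation pQ := (map_poly (intr : int -> rat)).
Definition mX (n : nat) : {poly int} := 'X^n - 1.
Definition PP (n d : nat) : {poly int} := \prod_(e <- rem d (divisors n)) 'Phi_e.

Section Cyc.
Variables (n : nat) (n0 : (0 < n)%N).

Lemma mX_monic : mX n \is monic.
Proof. by rewrite /mX -polyC1 monicXnsubC. Qed.

Lemma mX_prod : \prod_(d <- divisors n) 'Phi_d = mX n.
Proof. exact: prod_Cyclotomic. Qed.

Lemma mX_PP d : d \in divisors n -> mX n = 'Phi_d * PP n d.
Proof. by move=> hd; rewrite -mX_prod (big_rem d). Qed.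

Lemma mX_Q : pQ (mX n) = \prod_(d <- divisors n) pQ 'Phi_d.
Proof. by rewrite -mX_prod rmorph_prod. Qed.

Lemma sep_mX : separable_poly (pQ (mX n)).
Proof.
rewrite /mX rmorphB rmorph1 /= map_polyXn; apply: separable_Xn_sub_1.
by rewrite pnatr_eq0 -lt0n.
Qed.

Lemma cop_PP d : d \in divisors n -> coprimep (pQ 'Phi_d) (pQ (PP n d)).
Proof. by move=> hd; have := sep_mX; rewrite (mX_PP hd) rmorphM separable_mul => /and3P[]. Qed.

Lemma phi_dvd_PP e d : e \in divisors n -> d \in divisors n -> e != d ->
  pQ 'Phi_e %| pQ (PP n d).
Proof.
move=> he hd hne; rewrite /PP rmorph_prod (big_rem e) /=; first exact: dvdp_mulr.
by rewrite mem_rem_uniq ?divisors_uniq // inE hne.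
Qed.

Lemma phi_dvd_mX e : e \in divisors n -> pQ 'Phi_e %| pQ (mX n).
Proof. by move=> he; rewrite (mX_PP he) rmorphM dvdp_mulr. Qed.

Lemma dvd_mX y : (forall e, e \in divisors n -> pQ 'Phi_e %| y) -> pQ (mX n) %| y.
Proof.
move=> H; have := sep_mX; rewrite mX_Q; move: H.
elim: (divisors n) => [|e r IH] H sep; first by rewrite big_nil dvd1p.
rewrite big_cons in sep *; move: sep; rewrite separable_mul => /and3P[_ s2 cop].
rewrite Gauss_dvdp // H ?mem_head // IH // => e' he'.
by apply: H; rewrite in_cons he' orbT.
Qed.

End Cyc.

Lemma phi_irr d (w : {poly rat}) : (0 < d)%N -> ~~ (pQ 'Phi_d %| w) ->
  coprimep (pQ 'Phi_d) w.
Proof.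
move=> d0 nd; apply/negPn/negP => ncop; case/negP: nd.
have [z pz] := C_prim_root_exists d0.
have comp (p : {poly int}) : map_poly ratr (pQ p) = map_poly (intr : int -> algC) p.
  by rewrite -map_poly_comp; apply: eq_map_poly => b /=; rewrite ratr_int.
set g := gcdp (pQ 'Phi_d) w.
have : size (map_poly (ratr : rat -> algC) g) != 1 by rewrite size_map_poly.
case/closed_rootP => y ry.
have ry2 : root (map_poly ratr (pQ 'Phi_d)) y.
  by apply: root_dvdp ry; rewrite dvdp_map dvdp_gcdl.
have ry3 : root (map_poly ratr w) y.
  by apply: root_dvdp ry; rewrite dvdp_map dvdp_gcdr.
rewrite comp (Cintr_Cyclotomic pz) (root_cyclotomic pz) in ry2.
have [p [Ep _] Hp] := minCpolyP y.
have : p = pQ 'Phi_d.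
  apply: (@map_inj_poly _ _ (ratr : rat -> algC)); [exact: fmorph_inj | exact: rmorph0 |].
  transitivity (minCpoly y); first by rewrite Ep.
  by rewrite comp (Cintr_Cyclotomic ry2) (minCpoly_cyclotomic ry2).
by move=> Epp; rewrite -Epp -Hp.
Qed.

Section Kern.
Variables (gT : finGroupType) (s : gT).
Local Notation n := (#[s]%g).
Local Notation ZG := (ZG s).
Local Notation peval := (peval s).
Local Notation gmul := (gmul s).

Lemma n_gt0 : (0 < n)%N. Proof. exact: order_gt0. Qed.

Lemma peval_mX : peval (mX n) = 0.
Proof.
rewrite /mX peval_sub; apply/eqP; rewrite subr_eq0; apply/eqP/ffunP => g.
by rewrite -(expr0 'X) !pevalXn expg_order expg0.
Qed.

Lemma mX_neq0 : mX n != 0. Proof. exact: monic_neq0 (mX_monic n_gt0). Qed.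

Lemma size_mX : size (mX n) = n.+1.
Proof. by rewrite /mX size_XnsubC ?n_gt0. Qed.

Lemma kern1 z : pQ (mX n) %| pQ z -> peval z = 0.
Proof.
move=> H; have Ez : z = z %/ mX n * mX n + z %% mX n :> {poly int}.
  exact: (Pdiv.IdomainMonic.divp_eq (mX_monic n_gt0) z).
set r := z %% mX n in Ez.
suff r0 : r = 0 by rewrite Ez r0 addr0 peval_mul peval_mX gmul0r.
have Ez' : pQ z = pQ (z %/ mX n) * pQ (mX n) + pQ r.
  by rewrite {1}Ez rmorphD rmorphM.
have H2 : pQ (mX n) %| pQ r by rewrite -(dvdp_addr _ (dvdp_mull (pQ (z %/ mX n)) (dvdpp (pQ (mX n))))) -Ez'.
apply/eqP; apply: contraT => rn0.
have hr : pQ r != 0.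
  by rewrite -size_poly_eq0 size_map_inj_poly ?size_poly_eq0 //; exact: intr_inj.
have := dvdp_leq hr H2; rewrite !size_map_inj_poly //; try exact: intr_inj.
by rewrite leqNgt ltn_modpN0 // mX_neq0.
Qed.

Lemma kern2 z : peval z = 0 -> pQ (mX n) %| pQ z.
Proof.
move=> H; have Ez : z = z %/ mX n * mX n + z %% mX n :> {poly int}.
  exact: (Pdiv.IdomainMonic.divp_eq (mX_monic n_gt0) z).
set r := z %% mX n in Ez.
have hr : (size r <= n)%N by rewrite -ltnS -size_mX ltn_modpN0 // mX_neq0.
suff r0 : r = 0 by rewrite Ez r0 addr0 rmorphM dvdp_mull.
have pr : peval r = 0.
  have -> : r = z - z %/ mX n * mX n by rewrite {1}Ez addrC addKr.
  by rewrite peval_sub H peval_mul peval_mX gmul0r subrr.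
apply/polyP => k; rewrite coef0; case: (ltnP k n) => hk.
  by rewrite -(peval_small hr hk) pr ffunE.
by rewrite nth_default // (leq_trans hr hk).
Qed.

End Kern.

Lemma dvdp_sumP (R : idomainType) (I : Type) (d : {poly R}) (r : seq I) (P : pred I)
  (F : I -> {poly R}) : (forall i, P i -> d %| F i) -> d %| \sum_(i <- r | P i) F i.
Proof.
move=> H; apply: (big_ind (fun q => d %| q)); [exact: dvdp0 | | exact: H].
by move=> x y hx hy; apply: dvdp_add.
Qed.

Lemma polyE_le (R : nzRingType) (p : {poly R}) k : (size p <= k)%N ->
  p = \sum_(l < k) p`_l *: 'X^l.
Proof.
move=> h; rewrite -poly_def; apply/polyP => i; rewrite coef_poly.
by case: ltnP => // hi; rewrite nth_default // (leq_trans h hi).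
Qed.

Section Claims.
Variables (gT : finGroupType) (s : gT).
Local Notation n := (#[s]%g).
Local Notation ZG := (ZG s).
Local Notation peval := (peval s).
Local Notation gmul := (gmul s).

Lemma Pfd_PP d : d \in divisors n -> Pfd s d = PP n d.
Proof.
move=> hd; transitivity (mX n %/ 'Phi_d); first by [].
by rewrite (mX_PP (n_gt0 s) hd) mulrC Pdiv.IdomainMonic.mulpK // Cyclotomic_monic.
Qed.

Lemma hDd D : all (fun d => (0 < d)%N && (d %| n)%N) D -> forall d, d \in D -> d \in divisors n.
Proof.
by move=> hD d hd; have /andP [_ h] := allP hD d hd; rewrite -dvdn_divisors // n_gt0.
Qed.

Lemma claimA1 D x : all (fun d => (0 < d)%N && (d %| n)%N) D -> MbarD s D x ->
  forall e, e \in divisors n -> e \notin D -> pQ 'Phi_e %| pQ (lift s x).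
Proof.
move=> hD [hx [a [a0 [c Ec]]]] e he heD.
set S := \sum_(d <- D) \sum_(l < totient d) c d l *: (Pfd s d * 'X^l).
have ES : x *~ a = peval S.
  rewrite Ec /S peval_sum; apply: eq_bigr => d _; rewrite peval_sum.
  by apply: eq_bigr => l _; rewrite peval_scale.
have k : peval (a *: lift s x - S) = 0 by rewrite peval_sub peval_scale peval_lift // ES subrr.
have := dvdp_trans (phi_dvd_mX (n_gt0 s) he) (kern2 k).
rewrite raddfB /= map_polyZ /=.
have dS : pQ 'Phi_e %| pQ S.
  rewrite /S rmorph_sum /= big_seq; apply: dvdp_sumP => d hd; rewrite rmorph_sum.
  apply: dvdp_sumP => l _; rewrite -mul_polyC rmorphM /= dvdp_mull //.
  rewrite rmorphM /= dvdp_mulr // Pfd_PP ?(hDd hD) //.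
  have hne : e != d by apply/eqP => E; rewrite E hd in heD.
  exact: (phi_dvd_PP he (hDd hD hd) hne).
move=> h1; have := dvdp_add h1 dS; rewrite subrK dvdpZr //; by rewrite intr_eq0.
Qed.

Lemma claimA2 D p : uniq D -> all (fun d => (0 < d)%N && (d %| n)%N) D ->
  (forall e, e \in divisors n -> e \notin D -> pQ 'Phi_e %| pQ p) -> MbarD s D (peval p).
Proof.
move=> uD hD hp; split; first exact: peval_ZG.
have hb : forall d, exists b : {poly rat}, d \in divisors n ->
    pQ 'Phi_d %| 1 - b * pQ (PP n d).
  move=> d; case: (boolP (d \in divisors n)) => hd; last by exists 0.
  have /Bezout_eq1_coprimepP [[u1 u2] /= E] := cop_PP (n_gt0 s) hd.
  by exists u2 => _; rewrite -E addrK dvdp_mull // dvdpp.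
pose b d := proj1_sig (constructive_indefinite_description _ (hb d)).
have hb' d : d \in divisors n -> pQ 'Phi_d %| 1 - b d * pQ (PP n d).
  by rewrite /b; case: (constructive_indefinite_description _ _).
pose r d := (b d * pQ p) %% pQ 'Phi_d.
pose q d := projT1 (rat_poly_scale (r d)).
pose ad d := s2val (projT2 (rat_poly_scale (r d))).
have ad0 d : ad d != 0 := s2valP (projT2 (rat_poly_scale (r d))).
have Er d : r d = (ad d)%:~R^-1 *: pQ (q d) := s2valP' (projT2 (rat_poly_scale (r d))).
pose A := \prod_(d <- D) ad d.
pose t d := (\prod_(e <- rem d D) ad e) *: q d.
have At d : d \in D -> A%:~R *: r d = pQ (t d).
  move=> hd; rewrite Er scalerA /A (big_rem d hd) /= intrM mulrAC mulfV ?intr_eq0 //.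
  by rewrite mul1r /t map_polyZ.
have st d : d \in D -> (size (t d) <= totient d)%N.
  move=> hd; rewrite -(size_map_inj_poly (f := intr : int -> rat)) //; last exact: intr_inj.
  rewrite -At // -ltnS; apply: leq_ltn_trans (size_scale_leq _ _) _.
  rewrite -(size_Cyclotomic d) -(size_map_inj_poly (f := intr : int -> rat) _ _ 'Phi_d) //;
    last exact: intr_inj.
  rewrite ltn_modpN0 // -size_poly_eq0 size_map_inj_poly //; last exact: intr_inj.
  by rewrite size_poly_eq0 monic_neq0 // Cyclotomic_monic.
exists A; split.
  by rewrite prodf_seq_neq0; apply/allP => d _; rewrite ad0.
exists (fun d l => (t d)`_l).
transitivity (peval (\sum_(d <- D) Pfd s d * t d)); last first.
  rewrite peval_sum; apply: eq_big_seq => d hd.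
  rewrite {1}(polyE_le (st d hd)) mulr_sumr peval_sum; apply: eq_bigr => l _.
  by rewrite -scalerAr peval_scale.
apply/eqP; rewrite -subr_eq0 -peval_scale -peval_sub; apply/eqP/kern1.
rewrite [X in _ %| X]raddfB [X in _ %| X - _]map_polyZ [X in _ %| _ - X]rmorph_sum.
have -> : \sum_(d <- D) pQ (Pfd s d * t d) =
    A%:~R *: \sum_(d <- D) pQ (PP n d) * r d.
  rewrite scaler_sumr; apply: eq_big_seq => d hd.
  by rewrite rmorphM /= Pfd_PP ?(hDd hD) // -At // scalerAr.
rewrite -scalerBr dvdpZr ?intr_eq0; last first.
  by rewrite prodf_seq_neq0; apply/allP => d _; rewrite ad0.
apply: (dvd_mX (n_gt0 s)) => e he.
case: (boolP (e \in D)) => heD.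
  rewrite (big_rem e heD) /= opprD addrA; apply: dvdp_sub.
    have Er' : r e = b e * pQ p - (b e * pQ p %/ pQ 'Phi_e) * pQ 'Phi_e.
      by apply/eqP; rewrite eq_sym subr_eq addrC -divp_eq.
    have -> : pQ p - pQ (PP n e) * r e = (1 - b e * pQ (PP n e)) * pQ p
        + (pQ (PP n e) * (b e * pQ p %/ pQ 'Phi_e)) * pQ 'Phi_e.
      rewrite Er'; ring.
    by apply: dvdp_add; [apply: dvdp_mulr; apply: hb' | apply: dvdp_mull; apply: dvdpp].
  rewrite big_seq_cond; apply: dvdp_sumP => d /andP [hd _]; apply: dvdp_mulr.
  apply: phi_dvd_PP => //; first by apply: (hDd hD); apply: mem_rem hd.
  by apply/eqP => E; move: hd; rewrite -E mem_rem_uniqF.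
apply: dvdp_sub; first exact: hp.
rewrite big_seq; apply: dvdp_sumP => d hd; apply: dvdp_mulr.
apply: phi_dvd_PP => //; first exact: (hDd hD).
by apply/eqP => E; rewrite E hd in heD.
Qed.

End Claims.

Section ClaimB.
Variables (gT : finGroupType) (s : gT).
Local Notation n := (#[s]%g).
Local Notation ZG := (ZG s).
Local Notation peval := (peval s).
Local Notation gmul := (gmul s).
Variables (M : {ffun gT -> int} -> Prop) (hM : is_submodule s M).

Lemma Mz y c : M y -> M (y *~ c).
Proof.
case: hM => _ M0 Madd Mopp _ My.
have Hn k : M (y *+ k) by elim: k => [|k IH]; [rewrite mulr0n | rewrite mulrS; apply: Madd].
case: c => k; first by rewrite -pmulrn.
by rewrite NegzE mulrNz -pmulrn; apply: Mopp.
Qed.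

Lemma Msum (I : Type) (r : seq I) (P : pred I) (F : I -> {ffun gT -> int}) :
  (forall i, P i -> M (F i)) -> M (\sum_(i <- r | P i) F i).
Proof.
case: hM => _ M0 Madd _ _ H.
by apply: (big_ind M) => // x y hx hy; apply: Madd.
Qed.

Lemma MD_sub D : (forall d, d \in D -> M (peval (Pfd s d))) -> forall y, MD s D y -> M y.
Proof.
move=> H y [c ->]; rewrite big_seq; apply: Msum => d hd; apply: Msum => l _.
apply: Mz; rewrite mulrC peval_mul; case: hM => _ _ _ _ Mg.
by apply: Mg; [exact: peval_ZG | exact: H].
Qed.

Lemma claimB1 (htf : torsion_free_quot s M) d : d \in divisors n ->
  (exists z, M z /\ ~~ (pQ 'Phi_d %| pQ (lift s z))) -> M (peval (Pfd s d)).
Proof.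
move=> hd [z [Mz' nd]].
case: hM => Msub _ _ _ Mg.
have d0 : (0 < d)%N by apply: (dvdn_gt0 (n_gt0 s)); rewrite dvdn_divisors ?n_gt0.
have /Bezout_eq1_coprimepP [[u1 u2] /= E] := phi_irr d0 nd.
have [t [a a0 Eu]] := rat_poly_scale u2.
have Et : pQ t = a%:~R *: u2 by rewrite Eu scalerA mulfV ?intr_eq0 // scale1r.
have K : peval (a *: Pfd s d - Pfd s d * t * lift s z) = 0.
  apply: kern1.
  rewrite [X in _ %| X]raddfB [X in _ %| X - _]map_polyZ [X in _ %| _ - X]rmorphM.
  rewrite [X in _ %| _ - X * _]rmorphM /= Et (mX_PP (n_gt0 s) hd) rmorphM Pfd_PP //.
  have -> : a%:~R *: pQ (PP n d) - pQ (PP n d) * (a%:~R *: u2) * pQ (lift s z) =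
      (a%:~R *: u1) * (pQ 'Phi_d * pQ (PP n d)).
    rewrite -[a%:~R *: pQ (PP n d)]mulr1 -E -!mul_polyC; ring.
  exact: dvdp_mull.
have : M (peval (Pfd s d) *~ a).
  rewrite -peval_scale.
  have -> : peval (a *: Pfd s d) = peval (Pfd s d * t * lift s z).
    by apply/eqP; rewrite -subr_eq0 -peval_sub K.
  rewrite peval_mul peval_lift; last exact: Msub.
  by apply: Mg => //; exact: peval_ZG.
by move=> H; apply: (htf _ _ a0 (peval_ZG _ _) H).
Qed.

End ClaimB.

Lemma lift_dvd (gT : finGroupType) (s : gT) x p e : e \in divisors #[s]%g ->
  x = peval s p -> (pQ 'Phi_e %| pQ (lift s x)) = (pQ 'Phi_e %| pQ p).
Proof.
move=> he Ex.
have k : peval s (lift s x - p) = 0 by rewrite peval_sub peval_lift Ex ?peval_ZG // subrr.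
have := dvdp_trans (phi_dvd_mX (n_gt0 s) he) (kern2 k).
rewrite raddfB /= => H.
apply/idP/idP => h.
  by have := dvdp_sub h H; rewrite opprB addrC subrK.
by have := dvdp_add H h; rewrite subrK.
Qed.

Definition pb (P : Prop) : bool := if excluded_middle_informative P then true else false.
Lemma pbP (P : Prop) : pb P <-> P.
Proof. by rewrite /pb; case: excluded_middle_informative. Qed.

Unset Implicit Arguments.
Theorem corollaryA2 (gT : finGroupType) (sigma : gT)
    (M : {ffun gT -> int} -> Prop) :
  (is_submodule sigma M /\ torsion_free_quot sigma M) <->
  exists D : seq nat,
    [/\ uniq D, all (fun d => (0 < d)%N && (d %| #[sigma]%g)%N) D &
        forall x, M x <-> MbarD sigma D x].
Proof.
have n0 := n_gt0 sigma.
split.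
  move=> [hM htf].
  pose D := [seq d <- divisors #[sigma]%g |
    pb (exists z, M z /\ ~~ (pQ 'Phi_d %| pQ (lift sigma z)))].
  have uD : uniq D by rewrite filter_uniq // divisors_uniq.
  have aD : all (fun d => (0 < d)%N && (d %| #[sigma]%g)%N) D.
    apply/allP => d; rewrite mem_filter => /andP [_ hd].
    by rewrite -dvdn_divisors // in hd; rewrite hd (dvdn_gt0 n0 hd).
  exists D; split => // x; split.
    move=> Mx; have hx : x \in ZG sigma by case: hM => Msub _ _ _ _; apply: Msub.
    rewrite -(peval_lift hx); apply: claimA2 => // e he heD.
    move: heD; rewrite mem_filter he andbT => /negP hn.
    apply/negPn/negP => nd; apply: hn; apply/pbP; by exists x.
  move=> [hx [a [a0 HMD]]]; apply: (htf _ _ a0 hx); apply: (MD_sub hM) HMD => d.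
  rewrite mem_filter => /andP [/pbP hex hd].
  exact: (claimB1 hM htf hd hex).
move=> [D [uD aD HM]].
have Hchar x : M x <-> (x \in ZG sigma /\
    forall e, e \in divisors #[sigma]%g -> e \notin D -> pQ 'Phi_e %| pQ (lift sigma x)).
  rewrite HM; split.
    by move=> H; split; [case: H | exact: claimA1 H].
  move=> [hx H]; rewrite -(peval_lift hx); exact: claimA2.
split.
  split.
  - by move=> x /Hchar [].
  - apply/Hchar; split; first by rewrite -(peval0 sigma) peval_ZG.
    move=> e he _; rewrite (lift_dvd he (esym (peval0 sigma))) rmorph0; exact: dvdp0.
  - move=> x y /Hchar [hx Hx] /Hchar [hy Hy]; apply/Hchar.
    have E : x + y = peval sigma (lift sigma x + lift sigma y)
      by rewrite peval_add !peval_lift.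
    split; first by rewrite E peval_ZG.
    move=> e he heD; rewrite (lift_dvd he E) rmorphD; apply: dvdp_add; [exact: Hx | exact: Hy].
  - move=> x /Hchar [hx Hx]; apply/Hchar.
    have E : - x = peval sigma (- lift sigma x) by rewrite peval_opp !peval_lift.
    split; first by rewrite E peval_ZG.
    move=> e he heD; rewrite (lift_dvd he E) rmorphN dvdpNr; exact: Hx.
  - move=> r x hr /Hchar [hx Hx]; apply/Hchar.
    have E : gmul sigma r x = peval sigma (lift sigma r * lift sigma x)
      by rewrite peval_mul !peval_lift.
    split; first by rewrite E peval_ZG.
    move=> e he heD; rewrite (lift_dvd he E) rmorphM; apply: dvdp_mull; exact: Hx.
move=> a x a0 hx /Hchar [_ Hx]; apply/Hchar; split => // e he heD.
have E : x *~ a = peval sigma (a *: lift sigma x) by rewrite peval_scale peval_lift.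
have := Hx e he heD; rewrite (lift_dvd he E) map_polyZ dvdpZr //; by rewrite intr_eq0.
Qed.
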